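(* Let $E=(C,V)$ be an approval-based election and let $S\subsetneq C$ be a winning committee under the $t_{\mathrm{maj}}$-Threshold rule with $|S|$ odd. Then for every candidate $c\in C\setminus S$, the committee $S\cup\{c\}$ is also a winning committee under the $t_{\mathrm{maj}}$-Threshold rule.
   Context: An approval-based election $E=(C,V)$ consists of a finite set $C$ of candidates and a list $V=(v_1,\dots,v_n)$ of voters, each identified with its approval ballot $v_i\subseteq C$. Under the $t_{\mathrm{maj}}$-Threshold rule, a voter $v_i$ approves a committee $S\subseteq C$ if $|S\cap v_i|\ge |S|/2$, and the rule outputs (as winning committees) all committees $S\subseteq C$ approved by the largest number of voters. *)

(* Defs.v *)
From mathcomp Require Import all_boot.
Set Implicit Arguments. Unset Strict Implicit. Unset Printing Implicit Defensive.

(* An election: candidates are the elements of a finite type C;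
   voters are a list of approval ballots (subsets of C). *)

(* t_maj threshold: voter v approves committee S iff |S ∩ v| >= |S|/2,
   written without division as |S| <= 2 |S ∩ v|. *)
Definition tmaj_approves (C : finType) (v : {set C}) (S : {set C}) : bool :=
  #|S| <= 2 * #|S :&: v|.

Definition tmaj_score (C : finType) (V : seq {set C}) (S : {set C}) : nat :=
  count (fun v => tmaj_approves v S) V.

Definition tmaj_winning (C : finType) (V : seq {set C}) (S : {set C}) : Prop :=
  forall S' : {set C}, tmaj_score V S' <= tmaj_score V S.

(* Main.v *)
Require Import Defs.
From mathcomp Require Import all_boot.
From mathcomp Require Import zify.

Theorem mainTheorem12 (C : finType) (V : seq {set C}) (S : {set C}) :
  S \proper [set: C] ->
  tmaj_winning V S ->
  odd #|S| ->
  forall c : C, c \notin S -> tmaj_winning V (c |: S).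
Proof.
move=> _ hW hodd c hc S'.
apply: (leq_trans (hW S')).
rewrite /tmaj_score; apply: sub_count => v.
rewrite /tmaj_approves cardsU1 hc /= => h.
have hsub : #|S :&: v| <= #|(c |: S) :&: v|.
  by apply: subset_leq_card; apply: setSI; apply: subsetUr.
have hne : #|S| != 2 * #|S :&: v|.
  apply/negP => /eqP e; move: hodd; rewrite e.
  by rewrite oddM.
have : #|S| < 2 * #|S :&: v| by rewrite ltn_neqAle hne h.
lia.
Qed.
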